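(* In the discrete single-buyer game with known total value $V$, there exists a mechanism for the seller which obtains total revenue at least $V/e-O(1)$ (the $O(1)$ being a constant independent of $T$ and of the buyer's values), when the buyer follows a dominant strategy.
   Context: Discrete single-buyer game: $T$ rounds, one divisible item per round; the buyer has value $v_t\in[0,1]$ for the round-$t$ item, arbitrary and unknown to the seller except that the total $V=\sum_t v_t$ is known to the seller. The buyer is limited-liability: in each round it cannot pay more than its value for the fraction of the item it receives. The seller may pay a reimbursement at the end; revenue is total payments minus reimbursements. A dominant strategy for the buyer is a utility-maximizing strategy (utility = value received minus payments plus reimbursement). *)

(* Defs.v *)
From Stdlib Require Import Reals Lra List.
Import ListNotations.
Open Scope R_scope.

Definition sumT (T : nat) (f : nat -> R) : R :=
  fold_right Rplus 0 (map f (seq 0 T)).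

(** An option (allocation fraction x, payment p) chosen by the buyer in a round. *)
Definition choice := (R * R)%type.

(** In each round t, given the
    history h of the buyer's previous choices (observed by the seller), the
    seller offers a menu of (allocation, payment) options; at the end it pays
    a reimbursement depending on the whole history. The mechanism does not
    depend on the values (only on T and V, through the existential). *)
Record mechanism := Mech {
  menu : nat -> list choice -> choice -> Prop;
  reimb : list choice -> R
}.

Definition wf_mechanism (M : mechanism) : Prop :=
  (forall t h c, menu M t h c -> 0 <= fst c <= 1 /\ 0 <= snd c) /\
  (forall t h, menu M t h (0, 0)) /\
  (forall h, 0 <= reimb M h).

(** A buyer strategy (for a fixed, known value profile) : the choice made in each round. *)
Definition strategy := nat -> choice.

Definition history (s : strategy) (t : nat) : list choice := map s (seq 0 t).

(** Feasible play: each choice is on the offered menu and respects limited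
    liability (payment at most value of the received fraction). *)
Definition feasible (T : nat) (M : mechanism) (v : nat -> R) (s : strategy) : Prop :=
  forall t, (t < T)%nat ->
    menu M t (history s t) (s t) /\ snd (s t) <= v t * fst (s t).

Definition utility (T : nat) (M : mechanism) (v : nat -> R) (s : strategy) : R :=
  sumT T (fun t => v t * fst (s t) - snd (s t)) + reimb M (history s T).

Definition revenue (T : nat) (M : mechanism) (s : strategy) : R :=
  sumT T (fun t => snd (s t)) - reimb M (history s T).

Definition dominant (T : nat) (M : mechanism) (v : nat -> R) (s : strategy) : Prop :=
  feasible T M v s /\
  forall s', feasible T M v s' -> utility T M v s' <= utility T M v s.

Definition valid_values (T : nat) (V : R) (v : nat -> R) : Prop :=
  (forall t, (t < T)%nat -> 0 <= v t <= 1) /\ sumT T v = V.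

(* Main.v *)
Require Import Defs.
From Stdlib Require Import Reals.
From Stdlib Require Import Lra Psatz List.
Import ListNotations.
Open Scope R_scope.

Lemma fold_plus_shift (l : list R) (a : R) :
  fold_right Rplus a l = fold_right Rplus 0 l + a.
Proof. induction l as [|x l IH]; simpl; [lra| rewrite IH; lra]. Qed.

Lemma sumT_S n f : sumT (S n) f = sumT n f + f n.
Proof.
  unfold sumT. rewrite seq_S, map_app, fold_right_app. simpl.
  rewrite fold_plus_shift. lra.
Qed.

Lemma sumT_0 f : sumT 0 f = 0.
Proof. reflexivity. Qed.

Lemma sumT_ext n f g : (forall t, (t < n)%nat -> f t = g t) -> sumT n f = sumT n g.
Proof.
  induction n as [|n IH]; intros H; [reflexivity|].
  rewrite !sumT_S, IH, H; [reflexivity| lia | intros; apply H; lia].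
Qed.

Lemma sumT_le n f g : (forall t, (t < n)%nat -> f t <= g t) -> sumT n f <= sumT n g.
Proof.
  induction n as [|n IH]; intros H; [rewrite !sumT_0; lra|].
  rewrite !sumT_S. assert (H1 := H n ltac:(lia)).
  assert (H2 : sumT n f <= sumT n g) by (apply IH; intros; apply H; lia). lra.
Qed.

Lemma sumT_eq_pw n f g : (forall t, (t < n)%nat -> f t <= g t) -> sumT n f = sumT n g ->
  forall t, (t < n)%nat -> f t = g t.
Proof.
  induction n as [|n IH]; intros H E t Ht; [lia|].
  rewrite !sumT_S in E.
  assert (H1 := H n ltac:(lia)).
  assert (H2 : sumT n f <= sumT n g) by (apply sumT_le; intros; apply H; lia).
  destruct (Nat.eq_dec t n) as [->|Hn]; [lra|].
  apply IH; [intros; apply H; lia | lra | lia].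
Qed.

Lemma history_S s t : history s (S t) = history s t ++ [s t].
Proof. unfold history. rewrite seq_S, map_app. reflexivity. Qed.

Definition ee := exp 1.
Definition kk V := ee / V.
Definition Pm V := V / ee.
Definition mm V q := Rmin q (Pm V).
Definition yy V q := exp (- (kk V * mm V q)).
Definition xa V q := / (ee * yy V q).
Definition GG V q := V * (1 - yy V q) + (q - mm V q).

Definition Psum (h : list choice) := fold_right Rplus 0 (map snd h).
Definition cert (c : choice) : R := if Rlt_dec 0 (fst c) then snd c / fst c else 0.
Definition csum (h : list choice) := fold_right Rplus 0 (map cert h).

Definition mainM (V : R) : mechanism :=
  Mech (fun t h c => c = (0,0) \/ (fst c = xa V (Psum h) /\ 0 <= snd c))
       (fun h => if Req_EM_T (csum h) V then V / ee + 1 else 0).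

Definition trivM : mechanism := Mech (fun t h c => c = (0,0)) (fun h => 0).

Lemma Psum_hist s t : Psum (history s t) = sumT t (fun i => snd (s i)).
Proof. unfold Psum, history, sumT. rewrite map_map. reflexivity. Qed.

Lemma csum_hist s t : csum (history s t) = sumT t (fun i => cert (s i)).
Proof. unfold csum, history, sumT. rewrite map_map. reflexivity. Qed.

Lemma ee_gt1 : 1 < ee.
Proof. unfold ee. assert (H := exp_ineq1 1 ltac:(lra)). lra. Qed.

Lemma kPm V : 0 < V -> kk V * Pm V = 1.
Proof. intros HV. unfold kk, Pm. assert (H := ee_gt1). field. lra. Qed.

Lemma kV V : 0 < V -> kk V * V = ee.
Proof. intros HV. unfold kk. field. lra. Qed.

Lemma kk_pos V : 0 < V -> 0 < kk V.
Proof. intros HV. unfold kk. assert (H := ee_gt1). apply Rdiv_lt_0_compat; lra. Qed.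

Lemma Pm_pos V : 0 < V -> 0 < Pm V.
Proof. intros HV. unfold Pm. assert (H := ee_gt1). apply Rdiv_lt_0_compat; lra. Qed.

Lemma yy_pos V q : 0 < yy V q.
Proof. apply exp_pos. Qed.

Lemma mm_le V q : mm V q <= Pm V /\ mm V q <= q.
Proof. unfold mm, Rmin. destruct (Rle_dec q (Pm V)); lra. Qed.

Lemma mm_mono V a b : a <= b -> 0 <= mm V b - mm V a <= b - a.
Proof. intros H. unfold mm, Rmin. destruct (Rle_dec a (Pm V)), (Rle_dec b (Pm V)); lra. Qed.

Lemma ey_ge1 V q : 0 < V -> 1 <= ee * yy V q.
Proof.
  intros HV. unfold ee, yy. rewrite <- exp_plus.
  assert (H1 := mm_le V q). assert (H2 := kPm V HV). assert (H3 := kk_pos V HV).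
  assert (H4 : kk V * mm V q <= kk V * Pm V) by (apply Rmult_le_compat_l; lra).
  assert (H5 := exp_ineq1_le (1 + - (kk V * mm V q))). lra.
Qed.

Lemma y_rel1 V a b : yy V b = yy V a * exp (- (kk V * (mm V b - mm V a))).
Proof. unfold yy. rewrite <- exp_plus. f_equal. ring. Qed.

Lemma y_rel2 V a b : yy V a = yy V b * exp (kk V * (mm V b - mm V a)).
Proof. unfold yy. rewrite <- exp_plus. f_equal. ring. Qed.

Lemma F2 V a b : yy V b >= yy V a * (1 - kk V * (mm V b - mm V a)).
Proof.
  rewrite (y_rel1 V a b). assert (H := exp_ineq1_le (- (kk V * (mm V b - mm V a)))).
  assert (Hy := yy_pos V a).
  apply Rle_ge. apply Rmult_le_compat_l; lra.
Qed.

Lemma F3 V a b : yy V a >= yy V b * (1 + kk V * (mm V b - mm V a)).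
Proof.
  rewrite (y_rel2 V a b). assert (H := exp_ineq1_le (kk V * (mm V b - mm V a))).
  assert (Hy := yy_pos V b).
  apply Rle_ge. apply Rmult_le_compat_l; lra.
Qed.

Lemma F5 V a b : 0 < V -> a <= b -> mm V b - mm V a = b - a \/ ee * yy V b = 1.
Proof.
  intros HV H. unfold mm at 1, Rmin. destruct (Rle_dec b (Pm V)) as [Hb|Hb].
  - left. unfold mm, Rmin. destruct (Rle_dec a (Pm V)); lra.
  - right. unfold ee, yy, mm, Rmin. destruct (Rle_dec b (Pm V)); [lra|].
    rewrite <- exp_plus. rewrite (kPm V HV). rewrite Rplus_opp_r.
    apply exp_0.
Qed.

Lemma xa_eq V q : xa V q * (ee * yy V q) = 1.
Proof.
  unfold xa. assert (H1 := yy_pos V q). assert (H2 := ee_gt1).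
  field. split; lra.
Qed.

Lemma xa_bounds V q : 0 < V -> 0 < xa V q <= 1.
Proof.
  intros HV. assert (H := ey_ge1 V q HV). unfold xa. split.
  - apply Rinv_0_lt_compat. lra.
  - rewrite <- Rinv_1. apply Rinv_le_contravar; lra.
Qed.

Lemma L1u V a b : 0 < V -> a <= b -> GG V b - GG V a <= (b - a) * (ee * yy V a).
Proof.
  intros HV H. set (D := mm V b - mm V a).
  assert (HD := mm_mono V a b H). fold D in HD.
  assert (H2 := F2 V a b). fold D in H2.
  assert (Hk := kV V HV). assert (Hey := ey_ge1 V a HV).
  assert (E : GG V b - GG V a = V * (yy V a - yy V b) + (b - a) - D)
    by (unfold GG, D; ring).
  rewrite E.
  assert (H3 : V * (yy V a - yy V b) <= V * (yy V a * (kk V * D))).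
  { apply Rmult_le_compat_l; lra. }
  assert (H4 : V * (yy V a * (kk V * D)) = ee * yy V a * D).
  { rewrite <- Hk. ring. }
  assert (H5 : 0 <= (ee * yy V a - 1) * ((b - a) - D)) by (apply Rmult_le_pos; lra).
  nra.
Qed.

Lemma L1l V a b : 0 < V -> a <= b -> (b - a) * (ee * yy V b) <= GG V b - GG V a.
Proof.
  intros HV H. set (D := mm V b - mm V a).
  assert (HD := mm_mono V a b H). fold D in HD.
  assert (H2 := F3 V a b). fold D in H2.
  assert (Hk := kV V HV).
  assert (E : GG V b - GG V a = V * (yy V a - yy V b) + (b - a) - D)
    by (unfold GG, D; ring).
  rewrite E.
  assert (H3 : V * (yy V b * (kk V * D)) <= V * (yy V a - yy V b)).
  { apply Rmult_le_compat_l; lra. }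
  assert (H4 : V * (yy V b * (kk V * D)) = ee * yy V b * D).
  { rewrite <- Hk. ring. }
  assert (H5 : (ee * yy V b - 1) * ((b - a) - D) = 0).
  { destruct (F5 V a b HV H) as [E1|E1]; fold D in E1.
    - rewrite E1. ring.
    - rewrite E1. ring. }
  nra.
Qed.

Lemma L2 V a b : 0 < V -> a <= b -> (xa V b - xa V a) * (V - GG V b) <= b - a.
Proof.
  intros HV H. set (D := mm V b - mm V a).
  assert (HD := mm_mono V a b H). fold D in HD.
  assert (H2 := F2 V a b). fold D in H2.
  assert (H3 := F3 V a b). fold D in H3.
  assert (Hk := kV V HV). assert (Hkp := kk_pos V HV).
  assert (Xa := xa_eq V a). assert (Xb := xa_eq V b).
  assert (Ya := yy_pos V a). assert (Yb := yy_pos V b).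
  assert (Ba := xa_bounds V a HV).
  assert (Hyy : yy V b <= yy V a).
  { assert (0 <= yy V b * (kk V * D)) by (apply Rmult_le_pos; [lra| apply Rmult_le_pos; lra]). nra. }
  assert (Hxx : xa V a <= xa V b).
  { unfold xa. apply Rinv_le_contravar.
    - assert (H0 := ee_gt1). apply Rmult_lt_0_compat; lra.
    - assert (H0 := ee_gt1). apply Rmult_le_compat_l; lra. }
  assert (Hm := mm_le V b).
  assert (E1 : V - GG V b <= V * yy V b) by (unfold GG; lra).
  assert (S1 : (xa V b - xa V a) * (V - GG V b) <= (xa V b - xa V a) * (V * yy V b)).
  { apply Rmult_le_compat_l; lra. }
  assert (E2 : (xa V b - xa V a) * (V * yy V b) = xa V a * V * (yy V a - yy V b)).
  { assert (e1 : xa V b * yy V b = / ee) by (assert (H0 := ee_gt1); field_simplify_eq; [nra| lra]).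
    assert (e2 : xa V a * yy V a = / ee) by (assert (H0 := ee_gt1); field_simplify_eq; [nra| lra]).
    replace ((xa V b - xa V a) * (V * yy V b)) with (V * (xa V b * yy V b) - xa V a * V * yy V b) by ring.
    rewrite e1. replace (xa V a * V * (yy V a - yy V b)) with (V * (xa V a * yy V a) - xa V a * V * yy V b) by ring.
    rewrite e2. ring. }
  assert (S2 : xa V a * V * (yy V a - yy V b) <= xa V a * V * (yy V a * (kk V * D))).
  { apply Rmult_le_compat_l; [apply Rmult_le_pos; lra| lra]. }
  assert (E3 : xa V a * V * (yy V a * (kk V * D)) = (xa V a * (ee * yy V a)) * D).
  { rewrite <- Hk. ring. }
  rewrite Xa in E3. lra.
Qed.

Lemma Gstep_up V P p : 0 < V -> 0 <= p -> GG V (P + p) - GG V P <= p / xa V P.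
Proof.
  intros HV Hp. assert (H := L1u V P (P + p) HV ltac:(lra)).
  assert (Xa := xa_eq V P). assert (B := xa_bounds V P HV).
  replace (p / xa V P) with (p * (ee * yy V P)).
  - replace (P + p - P) with p in H by ring. exact H.
  - unfold xa. assert (H0 := ee_gt1). assert (H1 := yy_pos V P). field. split; lra.
Qed.

Lemma GG_0 V : 0 < V -> GG V 0 = 0.
Proof.
  intros HV. unfold GG, yy, mm, Rmin. assert (H := Pm_pos V HV).
  destruct (Rle_dec 0 (Pm V)); [|lra]. rewrite Rmult_0_r, Ropp_0, exp_0. ring.
Qed.

Lemma GG_Pm V : 0 < V -> GG V (Pm V) = V - V / ee.
Proof.
  intros HV. unfold GG, yy, mm, Rmin. destruct (Rle_dec (Pm V) (Pm V)); [|lra].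
  rewrite (kPm V HV). rewrite exp_Ropp. unfold ee. ring_simplify. unfold Rdiv. ring.
Qed.

Lemma ey_Pm V : 0 < V -> ee * yy V (Pm V) = 1.
Proof.
  intros HV. unfold yy, mm, Rmin. destruct (Rle_dec (Pm V) (Pm V)); [|lra].
  rewrite (kPm V HV). unfold ee. rewrite <- exp_plus. rewrite Rplus_opp_r. apply exp_0.
Qed.

Lemma GG_upper V q : 0 < V -> GG V q <= V - 2 * (V / ee) + q.
Proof.
  intros HV. assert (HG := GG_Pm V HV). assert (He := ey_Pm V HV).
  destruct (Rle_dec q (Pm V)) as [Hq|Hq].
  - assert (H := L1l V q (Pm V) HV Hq). rewrite He in H. unfold Pm in *. lra.
  - assert (H := L1u V (Pm V) q HV ltac:(lra)). rewrite He in H. unfold Pm in *. lra.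
Qed.

Lemma Gstep_low V P v : 0 < V -> 0 <= v <= 1 ->
  v - kk V * v <= GG V (P + v * xa V P) - GG V P.
Proof.
  intros HV Hv. set (d := v * xa V P).
  assert (B := xa_bounds V P HV).
  assert (Hd : 0 <= d <= v) by (unfold d; split; nra).
  assert (H := L1l V P (P + d) HV ltac:(lra)).
  replace (P + d - P) with d in H by ring.
  assert (H2 := F2 V P (P + d)).
  assert (HD := mm_mono V P (P + d) ltac:(lra)).
  assert (Hkp := kk_pos V HV).
  assert (Ya := yy_pos V P).
  assert (Xa := xa_eq V P).
  assert (H3 : yy V (P + d) >= yy V P * (1 - kk V * d)).
  { assert (kk V * (mm V (P + d) - mm V P) <= kk V * d) by (apply Rmult_le_compat_l; lra). nra. }
  assert (H4 : d * (ee * yy V (P + d)) >= d * (ee * yy V P) * (1 - kk V * d)).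
  { assert (H0 := ee_gt1).
    assert (0 <= (d * ee) * (yy V (P + d) - yy V P * (1 - kk V * d))) by (apply Rmult_le_pos; nra).
    nra. }
  assert (H5 : d * (ee * yy V P) = v) by (unfold d; rewrite Rmult_assoc, Xa; ring).
  rewrite H5 in H4.
  assert (H6 : kk V * v * d <= kk V * v) by (assert (0 <= kk V * v) by nra; nra).
  nra.
Qed.

Lemma xa_mono V a b : 0 < V -> a <= b -> xa V a <= xa V b.
Proof.
  intros HV H. set (D := mm V b - mm V a).
  assert (HD := mm_mono V a b H). fold D in HD.
  assert (H3 := F3 V a b). fold D in H3.
  assert (Hkp := kk_pos V HV). assert (Yb := yy_pos V b).
  assert (Hyy : yy V b <= yy V a).
  { assert (0 <= yy V b * (kk V * D)) by (apply Rmult_le_pos; [lra| apply Rmult_le_pos; lra]). nra. }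
  unfold xa. assert (H0 := ee_gt1). apply Rinv_le_contravar.
  - apply Rmult_lt_0_compat; lra.
  - apply Rmult_le_compat_l; lra.
Qed.

Lemma sumT_zero n : sumT n (fun _ => 0) = 0.
Proof. induction n; [reflexivity| rewrite sumT_S, IHn; ring]. Qed.

Lemma xa_0 V : 0 < V -> xa V 0 = / ee.
Proof.
  intros HV. unfold xa, yy, mm, Rmin. assert (H := Pm_pos V HV).
  destruct (Rle_dec 0 (Pm V)); [|lra]. rewrite Rmult_0_r, Ropp_0, exp_0, Rmult_1_r. reflexivity.
Qed.

Lemma potential V T v s : 0 < V -> (forall t, (t < T)%nat -> 0 <= v t <= 1) ->
  feasible T (mainM V) v s ->
  forall t, (t <= T)%nat ->
  0 <= sumT t (fun i => snd (s i)) /\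
  GG V (sumT t (fun i => snd (s i))) <= sumT t v /\
  sumT t (fun i => v i * fst (s i) - snd (s i)) + xa V (sumT t (fun i => snd (s i))) * (V - sumT t v) <= V / ee.
Proof.
  intros HV Hv Hf. induction t as [|t IH]; intros Ht.
  - rewrite !sumT_0, GG_0, xa_0 by exact HV. unfold Rdiv. split; [lra|split; lra].
  - destruct (IH ltac:(lia)) as [HP [HG HU]].
    destruct (Hf t ltac:(lia)) as [Hm HL]. simpl in Hm.
    rewrite Psum_hist in Hm.
    assert (Hvt := Hv t ltac:(lia)).
    rewrite !sumT_S.
    set (P := sumT t (fun i => snd (s i))) in *.
    set (W := sumT t v) in *.
    set (U := sumT t (fun i => v i * fst (s i) - snd (s i))) in *.
    assert (BP := xa_bounds V P HV).
    destruct Hm as [E | [E1 E2]].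
    + rewrite E. simpl. rewrite Rplus_0_r.
      split; [lra|split; [lra|]].
      assert (0 <= xa V P * v t) by nra. nra.
    + set (p := snd (s t)) in *. set (x := fst (s t)) in *.
      rewrite E1 in HL.
      assert (Hpv : p / xa V P <= v t).
      { apply (Rmult_le_reg_r (xa V P)); [lra|]. unfold Rdiv. rewrite Rmult_assoc, Rinv_l; lra. }
      assert (Hs := Gstep_up V P p HV E2).
      split; [lra| split; [lra|]].
      assert (L := L2 V P (P + p) HV ltac:(lra)).
      assert (M := xa_mono V P (P + p) HV ltac:(lra)).
      assert (H1 : (xa V (P + p) - xa V P) * (V - (W + v t)) <= (xa V (P + p) - xa V P) * (V - GG V (P + p))).
      { apply Rmult_le_compat_l; lra. }
      rewrite E1. nra.
Qed.

Fixpoint hP (V : R) (v : nat -> R) (t : nat) : R :=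
  match t with 0 => 0 | S t => hP V v t + v t * xa V (hP V v t) end.

Definition sh V v : strategy := fun t => (xa V (hP V v t), v t * xa V (hP V v t)).

Lemma sh_sum V v t : sumT t (fun i => snd (sh V v i)) = hP V v t.
Proof. induction t; [reflexivity|]. rewrite sumT_S, IHt. reflexivity. Qed.

Lemma cert_le V T v s : 0 < V -> (forall t, (t < T)%nat -> 0 <= v t <= 1) ->
  feasible T (mainM V) v s -> forall t, (t < T)%nat -> cert (s t) <= v t.
Proof.
  intros HV Hv Hf t Ht. destruct (Hf t Ht) as [Hm HL]. simpl in Hm.
  assert (Hvt := Hv t Ht). unfold cert.
  destruct (Rlt_dec 0 (fst (s t))) as [Hx|Hx]; [|lra].
  apply (Rmult_le_reg_r (fst (s t))); [lra|]. unfold Rdiv. rewrite Rmult_assoc, Rinv_l; lra.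
Qed.

Lemma certified_pw V T v s : 0 < V -> (forall t, (t < T)%nat -> 0 <= v t <= 1) ->
  feasible T (mainM V) v s -> csum (history s T) = sumT T v ->
  forall t, (t < T)%nat ->
   v t * fst (s t) - snd (s t) = 0 /\
   snd (s t) = v t * xa V (sumT t (fun i => snd (s i))).
Proof.
  intros HV Hv Hf Hc t Ht.
  rewrite csum_hist in Hc.
  assert (Ec := sumT_eq_pw T _ _ (cert_le V T v s HV Hv Hf) Hc t Ht). simpl in Ec.
  destruct (Hf t Ht) as [Hm HL]. simpl in Hm. rewrite Psum_hist in Hm.
  unfold cert in Ec.
  destruct Hm as [E | [E1 E2]].
  - rewrite E in *. simpl in *. destruct (Rlt_dec 0 0); [lra|]. rewrite <- Ec. split; ring.
  - assert (BP := xa_bounds V (sumT t (fun i => snd (s i))) HV).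
    destruct (Rlt_dec 0 (fst (s t))) as [Hx|Hx]; [|lra].
    assert (Ep : snd (s t) = v t * fst (s t)).
    { rewrite <- Ec. field. lra. }
    rewrite <- E1. split; [rewrite Ep; ring| exact Ep].
Qed.

Lemma honest_G V T v (s : strategy) : 0 < V -> (forall t, (t < T)%nat -> 0 <= v t <= 1) ->
  (forall t, (t < T)%nat -> snd (s t) = v t * xa V (sumT t (fun i => snd (s i)))) ->
  forall t, (t <= T)%nat ->
  sumT t v - kk V * sumT t v <= GG V (sumT t (fun i => snd (s i))).
Proof.
  intros HV Hv Hs. induction t as [|t IH]; intros Ht.
  - rewrite !sumT_0, GG_0 by exact HV. lra.
  - rewrite !sumT_S. rewrite (Hs t ltac:(lia)).
    assert (H := Gstep_low V (sumT t (fun i => snd (s i))) (v t) HV (Hv t ltac:(lia))).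
    assert (IH' := IH ltac:(lia)). lra.
Qed.

Lemma utility_main V T v s : 0 < V -> (forall t, (t < T)%nat -> 0 <= v t <= 1) ->
  sumT T v = V -> feasible T (mainM V) v s ->
  (csum (history s T) = V /\ utility T (mainM V) v s = V / ee + 1) \/
  (csum (history s T) <> V /\ utility T (mainM V) v s <= V / ee).
Proof.
  intros HV Hv HVs Hf. unfold utility. simpl.
  destruct (Req_EM_T (csum (history s T)) V) as [Hc|Hc].
  - left. split; [exact Hc|].
    assert (Hc' : csum (history s T) = sumT T v) by lra.
    rewrite (sumT_ext T _ (fun _ => 0)).
    + rewrite sumT_zero. ring.
    + intros t Ht. exact (proj1 (certified_pw V T v s HV Hv Hf Hc' t Ht)).
  - right. split; [exact Hc|].
    destruct (potential V T v s HV Hv Hf T (le_n T)) as [_ [_ HU]].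
    rewrite HVs in HU. lra.
Qed.

Theorem theorem17 :
  exists C : R,
    forall (T : nat) (V : R),
      exists M : mechanism,
        wf_mechanism M /\
        forall v : nat -> R,
          valid_values T V v ->
          (exists s, dominant T M v s) /\
          (forall s, dominant T M v s -> revenue T M s >= V / exp 1 - C).
Proof.
  exists (exp 1 + 1). intros T V.
  assert (He := ee_gt1). unfold ee in He.
  destruct (Rle_dec V 0) as [HV|HV].
  - exists trivM. split.
    + split; [|split].
      * intros t h c Hc. simpl in Hc. subst c. simpl. lra.
      * intros. simpl. reflexivity.
      * intros. simpl. lra.
    + intros v [Hv HVs].
      assert (Hz : forall s, feasible T trivM v s ->
                 forall t, (t < T)%nat -> s t = (0,0)).
      { intros s Hf t Ht. exact (proj1 (Hf t Ht)). }
      assert (Hu : forall s, feasible T trivM v s -> utility T trivM v s = 0).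
      { intros s Hf. unfold utility. simpl.
        rewrite (sumT_ext T _ (fun _ => 0)); [rewrite sumT_zero; ring|].
        intros t Ht. rewrite (Hz s Hf t Ht). simpl. ring. }
      split.
      * exists (fun _ => (0,0)).
        assert (Hf0 : feasible T trivM v (fun _ => (0,0))).
        { intros t Ht. simpl. split; [reflexivity|]. assert (H := Hv t Ht). lra. }
        split; [exact Hf0|].
        intros s' Hf'. rewrite (Hu s' Hf'), (Hu _ Hf0). lra.
      * intros s [Hf _]. unfold revenue. simpl.
        rewrite (sumT_ext T _ (fun _ => 0)); [rewrite sumT_zero|].
        -- assert (V / exp 1 <= 0).
           { unfold Rdiv. assert (0 < / exp 1) by (apply Rinv_0_lt_compat; lra). nra. }
           lra.
        -- intros t Ht. rewrite (Hz s Hf t Ht). reflexivity.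
  - assert (HV' : 0 < V) by lra. clear HV.
    exists (mainM V). split.
    + split; [|split].
      * intros t h c Hc. simpl in Hc. destruct Hc as [E | [E1 E2]].
        -- subst c. simpl. lra.
        -- rewrite E1. assert (B := xa_bounds V (Psum h) HV'). lra.
      * intros. simpl. left. reflexivity.
      * intros h. simpl. destruct (Req_EM_T (csum h) V).
        -- assert (0 <= V / ee).
           { unfold Rdiv, ee. assert (0 < / exp 1) by (apply Rinv_0_lt_compat; lra). nra. }
           lra.
        -- lra.
    + intros v [Hv HVs].
      (* honest strategy *)
      assert (Hfh : feasible T (mainM V) v (sh V v)).
      { intros t Ht. simpl. rewrite Psum_hist, sh_sum. split.
        - right. split; [reflexivity|]. assert (H := Hv t Ht).
          assert (B := xa_bounds V (hP V v t) HV'). nra.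
        - lra. }
      assert (Hch : csum (history (sh V v) T) = V).
      { rewrite csum_hist. transitivity (sumT T v); [|exact HVs]. apply sumT_ext. intros t Ht.
        unfold cert, sh. simpl. assert (B := xa_bounds V (hP V v t) HV').
        destruct (Rlt_dec 0 (xa V (hP V v t))); [|lra]. field. lra. }
      assert (Huh : utility T (mainM V) v (sh V v) = V / ee + 1).
      { destruct (utility_main V T v (sh V v) HV' Hv HVs Hfh) as [[_ H]|[H _]];
          [exact H| contradiction]. }
      split.
      * exists (sh V v). split; [exact Hfh|].
        intros s' Hf'. rewrite Huh.
        destruct (utility_main V T v s' HV' Hv HVs Hf') as [[_ H]|[_ H]]; lra.
      * intros s [Hf Hd].
        assert (Hge := Hd (sh V v) Hfh). rewrite Huh in Hge.
        destruct (utility_main V T v s HV' Hv HVs Hf) as [[Hc Hu]|[_ Hu]]; [|lra].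
        assert (Hc' : csum (history s T) = sumT T v) by lra.
        assert (Hs : forall t, (t < T)%nat ->
                  snd (s t) = v t * xa V (sumT t (fun i => snd (s i)))).
        { intros t Ht. exact (proj2 (certified_pw V T v s HV' Hv Hf Hc' t Ht)). }
        assert (HG := honest_G V T v s HV' Hv Hs T (le_n T)).
        rewrite HVs, (kV V HV') in HG.
        assert (HU := GG_upper V (sumT T (fun i => snd (s i))) HV').
        unfold revenue. simpl. destruct (Req_EM_T (csum (history s T)) V); [|contradiction].
        unfold ee in *. lra.
Qed.
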